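(* Let $w\in\mathbb{R}^n$, $w\ge0$. The set of all bilevel feasible decompositions of $w$ is convex.
   Context: Multi-commodity network pricing setting: $G=(\mathcal{V},\mathcal{A})$ directed graph with arc costs $c\ge0$, nonempty tolled arc set $\mathcal{A}_1\subsetneq\mathcal{A}$, $n=|\mathcal{A}_1|$, $N$ node–arc incidence matrix; finite set $\mathcal{K}$ of commodities, commodity $k$ having origin $o^k$ and destination $d^k$ connected by a path of arcs not in $\mathcal{A}_1$; $b^k_{o^k}=1$, $b^k_{d^k}=-1$, other entries $0$; $\mathcal{X}^k=\{x\in\mathbb{R}^{\mathcal{A}}: Nx=b^k,\ x\ge0\}$; $x_{\mathcal{A}_1}$ is the restriction of $x$ to $\mathcal{A}_1$. For $t\in\mathbb{R}^n$ let $f^k(t)=\min\{c^\top x+t^\top x_{\mathcal{A}_1}: x\in\mathcal{X}^k\}$ if $t\ge0$, $-\infty$ otherwise; $f=\sum_k f^k$; $g^k(w)=\sup_t\{f^k(t)-t^\top w\}$, $g(w)=\sup_t\{f(t)-t^\top w\}$. A decomposition of $w$ is a tuple $(w^k)_{k\in\mathcal{K}}$ of vectors $w^k\in\mathbb{R}^n$, $w^k\ge0$, with $\sum_{k}w^k=w$; it is bilevel feasible if $g(w)=\sum_{k\in\mathcal{K}}g^k(w^k)$. *)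

(* Defs.v *)
From HB Require Import structures.
From mathcomp Require Import all_boot all_order all_algebra.
From mathcomp Require Import boolp classical_sets reals constructive_ereal ereal.
Set Implicit Arguments. Unset Strict Implicit. Unset Printing Implicit Defensive.
Import Order.TTheory GRing.Theory Num.Theory.
Local Open Scope ring_scope.
Local Open Scope classical_set_scope.

Section Defs.
Variables (R : realType) (V A : finType) (src dst : A -> V) (c : A -> R)
  (A1 : {set A}) (K : finType) (o d : K -> V).

(* index type of the tolled arcs: R^n with n = #|A1| is (tolled -> R) *)
Definition tolled := {a : A | a \in A1}.

Definition untolled_rel : rel V :=
  fun u v => [exists a : A, [&& a \notin A1, src a == u & dst a == v]].

(* N x = b for node-arc incidence matrix N (+1 tail, -1 head),
   b_s = 1, b_t = -1, 0 elsewhere; X = {x | N x = b, x >= 0} *)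
Definition flow_set (s t : V) : set (A -> R) :=
  [set x | (forall a, 0 <= x a) /\
     forall v : V, \sum_(a | src a == v) x a - \sum_(a | dst a == v) x a
                   = (if v == s then 1 else 0) - (if v == t then 1 else 0)].

Definition restrA1 (x : A -> R) : tolled -> R := fun i => x (val i).

Definition dotT (t u : tolled -> R) : R := \sum_(i : tolled) t i * u i.

Definition nonnegT (t : tolled -> R) : Prop := forall i, 0 <= t i.

Definition fk (k : K) (t : tolled -> R) : \bar R :=
  if `[< nonnegT t >] then
    ereal_inf [set ((\sum_a c a * x a) + dotT t (restrA1 x))%:E
              | x in flow_set (o k) (d k)]
  else -oo%E.

Definition f (t : tolled -> R) : \bar R := (\sum_(k : K) fk k t)%E.

Definition gk (k : K) (w : tolled -> R) : \bar R :=
  ereal_sup (range (fun t => (fk k t - (dotT t w)%:E)%E)).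

Definition g (w : tolled -> R) : \bar R :=
  ereal_sup (range (fun t => (f t - (dotT t w)%:E)%E)).

Definition decomposition (w : tolled -> R) (W : K -> tolled -> R) : Prop :=
  (forall k i, 0 <= W k i) /\ (forall i, \sum_(k : K) W k i = w i).

Definition bilevel_feasible (w : tolled -> R) (W : K -> tolled -> R) : Prop :=
  decomposition w W /\ g w = (\sum_(k : K) gk k (W k))%E.

End Defs.

(* Main.v *)
Require Import Defs.
From HB Require Import structures.
From mathcomp Require Import all_boot all_order all_algebra.
From mathcomp Require Import boolp classical_sets reals constructive_ereal ereal.
From mathcomp Require Import ring lra.
Import Order.TTheory GRing.Theory Num.Theory.
Local Open Scope ring_scope.

Section Aux.
Variables (R : realType) (V A : finType) (src dst : A -> V) (c : A -> R)
  (A1 : {set A}) (K : finType) (o d : K -> V).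
Hypothesis hc : forall a, 0 <= c a.

Lemma dotT_lin (t a b : tolled A1 -> R) lam :
  dotT t (fun i => lam * a i + (1 - lam) * b i) =
  lam * dotT t a + (1 - lam) * dotT t b.
Proof.
rewrite /dotT !mulr_sumr -big_split /=; apply: eq_bigr => i _; ring.
Qed.

Lemma dotT_sum (t : tolled A1 -> R) (W : K -> tolled A1 -> R) :
  dotT t (fun i => \sum_k W k i) = \sum_k dotT t (W k).
Proof.
rewrite /dotT exchange_big /=; apply: eq_bigr => i _; by rewrite mulr_sumr.
Qed.

Lemma fk0_ge0 k : (0 <= fk src dst c o d k (fun _ : tolled A1 => 0%R))%E.
Proof.
rewrite /fk asboolT; last by move=> i.
apply/ereal_infP => _ [x [hx0 _] <-].
have -> : dotT (fun _ : tolled A1 => 0%R) (restrA1 x) = 0.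
  by rewrite /dotT big1 // => i _; rewrite mul0r.
rewrite lee_fin addr0.
by apply: sumr_ge0 => a _; apply: mulr_ge0.
Qed.

Lemma gk_ub k (a t : tolled A1 -> R) :
  (fk src dst c o d k t - (dotT t a)%:E <= gk src dst c o d k a)%E.
Proof. by apply: ereal_sup_ubound; exists t. Qed.

Lemma gk_ge0 k (a : tolled A1 -> R) : (0 <= gk src dst c o d k a)%E.
Proof.
apply: le_trans (gk_ub k a (fun _ : tolled A1 => 0%R)).
have -> : dotT (fun _ : tolled A1 => 0%R) a = 0.
  by rewrite /dotT big1 // => i _; rewrite mul0r.
by rewrite sube0 fk0_ge0.
Qed.

Lemma mix (lam : R) (x : \bar R) : 0 <= lam <= 1 ->
  (lam%:E * x + (1 - lam)%:E * x)%E = x.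
Proof.
move=> /andP[h0 h1].
rewrite -ge0_muleDl ?lee_fin ?subr_ge0 // -EFinD addrC subrK mul1e //.
Qed.

Lemma gk_conv k (a b : tolled A1 -> R) (lam : R) : 0 <= lam <= 1 ->
  (gk src dst c o d k (fun i => (lam * a i + (1 - lam) * b i)%R) <=
   lam%:E * gk src dst c o d k a + (1 - lam)%:E * gk src dst c o d k b)%E.
Proof.
move=> hl; have /andP[h0 h1] := hl.
have h0' : 0 <= 1 - lam by rewrite subr_ge0.
apply: ge_ereal_sup => _ [t _ <-].
have ha := gk_ub k a t; have hb := gk_ub k b t.
case E: (fk src dst c o d k t) ha hb => [r| |] ha hb.
- have ha' := lee_wpmul2l (x := lam%:E) (ltac:(by rewrite lee_fin)) ha.
  have hb' := lee_wpmul2l (x := (1 - lam)%:E) (ltac:(by rewrite lee_fin)) hb.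
  apply: le_trans (leeD ha' hb').
  rewrite dotT_lin -!EFinB -!EFinM -EFinD lee_fin.
  rewrite le_eqVlt; apply/orP; left; apply/eqP; ring.
- have Ea : gk src dst c o d k a = +oo%E by apply/eqP; rewrite -leye_eq.
  have Eb : gk src dst c o d k b = +oo%E by apply/eqP; rewrite -leye_eq.
  by rewrite Ea Eb mix // leey.
- by rewrite addNye leNye.
Qed.

Lemma g_le (w : tolled A1 -> R) (W : K -> tolled A1 -> R) :
  (forall i, \sum_k W k i = w i) ->
  (g src dst c o d w <= \sum_k gk src dst c o d k (W k))%E.
Proof.
move=> hW; apply: ge_ereal_sup => _ [t _ <-].
have -> : dotT t w = \sum_k dotT t (W k).
  by rewrite -dotT_sum; congr dotT; apply: funext => i; rewrite hW.
rewrite /f -sumEFin -fin_num_sumeN // -big_split /=.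
by apply: lee_sum => k _; apply: gk_ub.
Qed.

End Aux.

Theorem lemma6 (R : realType) (V A : finType) (src dst : A -> V) (c : A -> R)
  (A1 : {set A}) (K : finType) (o d : K -> V)
  (hc : forall a, 0 <= c a)
  (hA1 : A1 != finset.set0) (hA1p : A1 != [set: A])
  (hpath : forall k, connect (untolled_rel src dst A1) (o k) (d k))
  (w : tolled A1 -> R) (hw : forall i, 0 <= w i) :
  forall (W1 W2 : K -> tolled A1 -> R) (lam : R),
    0 <= lam <= 1 ->
    bilevel_feasible src dst c o d w W1 ->
    bilevel_feasible src dst c o d w W2 ->
    bilevel_feasible src dst c o d w
      (fun k i => lam * W1 k i + (1 - lam) * W2 k i).
Proof.
move=> W1 W2 lam hl [[h1p h1s] e1] [[h2p h2s] e2].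
have /andP[l0 l1] := hl.
have l0' : 0 <= 1 - lam by rewrite subr_ge0.
have hs : forall i, \sum_k (lam * W1 k i + (1 - lam) * W2 k i) = w i.
  move=> i; rewrite big_split /= -!mulr_sumr h1s h2s; ring.
split; first split.
- by move=> k i; apply: addr_ge0; apply: mulr_ge0.
- exact: hs.
apply: le_anti; rewrite (@g_le R V A src dst c A1 K o d w _ hs) /=.
apply: le_trans.
  apply: lee_sum => k _; exact: (@gk_conv R V A src dst c A1 K o d k (W1 k) (W2 k) lam hl).
rewrite big_split /= -!ge0_sume_distrr; last 2 first.
- by move=> k _; exact: (@gk_ge0 R V A src dst c A1 K o d hc k _).
- by move=> k _; exact: (@gk_ge0 R V A src dst c A1 K o d hc k _).
by rewrite -e1 -e2 mix.
Qed.
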